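(* Let $(\mathcal A,\gamma,\phi)$ be a $\mathbb Z_2$-graded noncommutative probability space and let $\mathcal U$ be the infinite graded tensor product of copies of $(\mathcal A,\gamma,\phi)$, with product functional $\tilde\phi$ and with $X^{(k)}$ denoting the image of $X\in\mathcal A$ in the $k$-th tensor factor $\mathcal A_k$. Then the algebras $(\mathcal A_k)_{k\in\mathbb N}$ are interchangeable: for all $X_1,\dots,X_n\in\mathcal A$, all indices $i_1,\dots,i_n\in\mathbb N$ and every bijection $\sigma$ of $\mathbb N$, $\tilde\phi(X_1^{(i_1)}\cdots X_n^{(i_n)})=\tilde\phi(X_1^{(\sigma(i_1))}\cdots X_n^{(\sigma(i_n))})$.
   Context: A $\mathbb Z_2$-graded noncommutative probability space $(\mathcal A,\gamma,\phi)$ consists of a complex unital algebra $\mathcal A=\mathcal A_+\oplus\mathcal A_-$ graded by an algebra automorphism $\gamma$ of order 2 ($\mathcal A_\pm=\{X:\gamma(X)=\pm X\}$) and a unital linear functional $\phi$ with $\phi\circ\gamma=\phi$. Homogeneous elements have degree $\partial X=0$ for $X\in\mathcal A_+$, $\partial X=1$ for $X\in\mathcal A_-$. The graded tensor product $\mathcal A_1\otimes_2\mathcal A_2$ of graded algebras is the vector space tensor product with multiplication $(X_1\otimes X_2)(X_1'\otimes X_2')=(-1)^{\partial X_2\,\partial X_1'}X_1X_1'\otimes X_2X_2'$ for homogeneous elements, extended bilinearly, grading $\gamma_1\otimes\gamma_2$, and functional $\phi_1\otimes\phi_2$; it is associative. The infinite graded tensor product is the union (inductive limit) of the finite graded tensor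 products $\mathcal A^{\otimes_2 N}$ under $x\mapsto x\otimes1$, with $\tilde\phi$ the product functional, and $X^{(k)}=1\otimes\cdots\otimes1\otimes X\otimes1\otimes\cdots$ ($X$ in position $k$). *)

(* Defs.v *)
From HB Require Import structures.
From mathcomp Require Import all_boot all_order all_algebra.
From mathcomp Require Import reals complex.

Set Implicit Arguments.
Unset Strict Implicit.
Unset Printing Implicit Defensive.

Import GRing.Theory Num.Theory.
Local Open Scope ring_scope.

Definition graded_ncps (R : realType) (A : algType R[i])
    (gamma : A -> A) (phi : A -> R[i]) : Prop :=
  (forall (a : R[i]) (x y : A), gamma (a *: x + y) = a *: gamma x + gamma y) /\
  (forall x y : A, gamma (x * y) = gamma x * gamma y) /\
  gamma 1 = 1 /\
  (forall x : A, gamma (gamma x) = x) /\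
  (forall (a : R[i]) (x y : A), phi (a *: x + y) = a * phi x + phi y) /\
  phi 1 = 1 /\
  (forall x : A, phi (gamma x) = phi x).

Section GradedTensor.
Variables (R : realType) (A : algType R[i]) (gamma : A -> A) (phi : A -> R[i]).

(* homogeneous components: A_+ (degree false = 0) and A_- (degree true = 1) *)
Definition hpart (b : bool) (x : A) : A :=
  if b then 2%:R^-1 *: (x - gamma x) else 2%:R^-1 *: (x + gamma x).

(* An elementary tensor c * (x_0 (x) x_1 (x) ... (x) x_{m-1} (x) 1 (x) 1 ...)
   of the infinite graded tensor product, whose factors x_k are homogeneous of
   the recorded degrees (the bool labels). *)
Definition hterm := (R[i] * seq (bool * A))%type.

(* an element of the infinite graded tensor product U, presented as a formal
   finite linear combination (sum) of homogeneous elementary tensors *)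
Definition tens := seq hterm.

Definition hfac (s : seq (bool * A)) (k : nat) : bool * A := nth (false, 1) s k.

(* graded product of homogeneous elementary tensors:
   (x_0 (x) ... )(y_0 (x) ...) = (-1)^(sum_{j<k} dx_k dy_j) x_0y_0 (x) x_1y_1 ... *)
Definition hterm_mul (u v : hterm) : hterm :=
  let n := maxn (size u.2) (size v.2) in
  let sgn := (\sum_(k < n) \sum_(j < k)
                ((hfac u.2 k).1 && (hfac v.2 j).1 : nat))%N in
  ((-1) ^+ sgn * u.1 * v.1,
   [seq ((hfac u.2 k).1 (+) (hfac v.2 k).1, (hfac u.2 k).2 * (hfac v.2 k).2)
   | k <- iota 0 n]).

Definition tens_mul (U V : tens) : tens := [seq hterm_mul u v | u <- U, v <- V].

Definition tens_one : tens := [:: (1, [::])].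

(* X^{(k)} = 1 (x) ... (x) 1 (x) X (x) 1 (x) ... with X in position k,
   written as X_+^{(k)} + X_-^{(k)} *)
Definition tens_embed (k : nat) (x : A) : tens :=
  [seq (1, rcons (nseq k (false, 1)) (b, hpart b x)) | b <- [:: false; true]].

Definition tens_phi (U : tens) : R[i] :=
  \sum_(u <- U) u.1 * \prod_(p <- u.2) phi p.2.

End GradedTensor.

(* Main.v *)
Require Import Defs.
From HB Require Import structures.
From mathcomp Require Import all_boot all_order all_algebra.
From mathcomp Require Import reals complex.
From mathcomp Require Import zify.
Set Implicit Arguments. Unset Strict Implicit. Unset Printing Implicit Defensive.
Import GRing.Theory Num.Theory.
Local Open Scope ring_scope.
Fixpoint Xs (T : Type) (h : T -> T -> bool) (e : T) (Q : seq T) : bool :=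
  if Q is y :: Q' then h e y (+) Xs h e Q' else false.
Fixpoint Hx (T : Type) (h : T -> T -> bool) (Q : seq T) : bool :=
  if Q is e :: Q' then Xs h e Q' (+) Hx h Q' else false.

Lemma Xs_cat T h (e : T) Q1 Q2 : Xs h e (Q1 ++ Q2) = Xs h e Q1 (+) Xs h e Q2.
Proof. by elim: Q1 => //= y Q1 ->; rewrite addbA. Qed.

Lemma Xs_nul T h (e : T) Q : (forall y, h e y = false) -> Xs h e Q = false.
Proof. by move=> H; elim: Q => //= y Q ->; rewrite H. Qed.

Lemma Hx_ins T h (e : T) Q1 Q2 : (forall x y, h x y = h y x) ->
  Hx h (Q1 ++ e :: Q2) = Xs h e (Q1 ++ Q2) (+) Hx h (Q1 ++ Q2).
Proof.
move=> hs; elim: Q1 => //= a Q1 ->.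
rewrite !Xs_cat /= (hs e a).
by case: (h a e); case: (Xs h a Q1); case: (Xs h a Q2); case: (Xs h e Q1);
  case: (Xs h e Q2); case: (Hx h (Q1 ++ Q2)).
Qed.

Lemma Hx_even (T : eqType) (h : T -> T -> bool) (nul : pred T) :
  (forall x y, h x y = h y x) -> (forall x, h x x = false) ->
  (forall x y, nul x -> h x y = false) ->
  forall Q, (forall e, e \in Q -> ~~ nul e -> ~~ odd (count_mem e Q)) ->
  Hx h Q = false.
Proof.
move=> hs hd hn Q.
elim: {Q}(size Q).+1 {-2}Q (ltnSn (size Q)) => // m IH [|e Q] //= szQ Hev.
case ne: (nul e).
  have -> : Xs h e Q = false by apply: Xs_nul => y; apply: hn.
  apply: IH => //.
  move=> e' e'Q ne'; have := Hev e'; rewrite inE e'Q orbT /= => /(_ isT ne').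
  by case: eqP => [Ee|] //; rewrite -Ee ne in ne'.
have : odd (count_mem e Q).
  by have := Hev e; rewrite inE eqxx /= ne /= => /(_ isT isT); case: odd.
move=> oc; have eQ : e \in Q by rewrite -has_pred1 has_count; case: (count _ _) oc.
case/splitPr: eQ szQ Hev => Q1 Q2 szQ Hev.
rewrite Hx_ins // !Xs_cat /= hd.
have -> : Hx h (Q1 ++ Q2) = false.
  apply: IH; first by move: szQ; rewrite !size_cat /=; lia.
  move=> e' e'Q ne'.
  have := Hev e'; rewrite inE mem_cat inE; rewrite mem_cat in e'Q.
  case/orP: e'Q => ->; rewrite ?orbT /= => /(_ isT ne');
  rewrite count_cat /= count_cat !oddD; case: (e == e') => /=;
  by case: (odd (count_mem e' Q1)); case: (odd (count_mem e' Q2)).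
by case: (Xs h e Q1); case: (Xs h e Q2).
Qed.

Definition tpiece (R : realType) (A : algType R[i]) (w : nat * (bool * A)) : hterm A :=
  (1, rcons (nseq w.1 (false, 1)) w.2).
Definition term (R : realType) (A : algType R[i]) (W : seq (nat * (bool * A))) : hterm A :=
  foldr (fun w acc => hterm_mul (tpiece w) acc) (1, [::]) W.
Definition factor (R : realType) (A : algType R[i]) (W : seq (nat * (bool * A))) (k : nat) : bool * A :=
  foldr (fun w acc => if k == w.1 then (w.2.1 (+) acc.1, w.2.2 * acc.2) else acc) (false, 1) W.
Definition Msz (T : Type) (W : seq (nat * T)) : nat := foldr (fun w m => maxn w.1.+1 m) 0%N W.

Lemma hfac_mul (R : realType) (A : algType R[i]) (u v : hterm A) k :
  hfac (hterm_mul u v).2 k = ((hfac u.2 k).1 (+) (hfac v.2 k).1, (hfac u.2 k).2 * (hfac v.2 k).2).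
Proof.
rewrite /hterm_mul /=; set n := maxn _ _.
case: (ltnP k n) => kn.
  by rewrite /hfac (nth_map 0%N) ?size_iota // nth_iota.
rewrite /hfac nth_default ?size_map ?size_iota //.
rewrite !nth_default ?mulr1 //; apply: leq_trans kn; rewrite ?leq_maxl ?leq_maxr //.
Qed.

Lemma size_mul (R : realType) (A : algType R[i]) (u v : hterm A) :
  size (hterm_mul u v).2 = maxn (size u.2) (size v.2).
Proof. by rewrite /= size_map size_iota. Qed.

Lemma term_cons (R : realType) (A : algType R[i]) w (W : seq (nat * (bool * A))) :
  term (w :: W) = hterm_mul (tpiece w) (term W).
Proof. by []. Qed.

Lemma hfac_tpiece (R : realType) (A : algType R[i]) (w : nat * (bool * A)) k :
  hfac (tpiece w).2 k = if k == w.1 then w.2 else (false, 1).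
Proof.
rewrite /hfac /= nth_rcons size_nseq.
case: ltngtP => h; rewrite ?nth_nseq ?h //.
Qed.

Lemma hfac_term (R : realType) (A : algType R[i]) (W : seq (nat * (bool * A))) k :
  hfac (term W).2 k = factor W k.
Proof.
elim: W => [|w W IH]; first by rewrite /hfac nth_nil.
rewrite term_cons hfac_mul hfac_tpiece IH /=; case: ifP => //= _. by case: (factor W k) => b y /=; rewrite mul1r.
Qed.

Lemma size_term (R : realType) (A : algType R[i]) (W : seq (nat * (bool * A))) :
  size (term W).2 = Msz W.
Proof. by elim: W => // w W IH; rewrite term_cons size_mul IH /= size_rcons size_nseq. Qed.

Lemma Msz_mem (T : Type) (W : seq (nat * T)) k : k \in map fst W -> (k < Msz W)%N.
Proof.
elim: W => //= w W IH; rewrite in_cons => /orP [/eqP ->|/IH h].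
  by rewrite leq_max ltnSn.
by rewrite leq_max h orbT.
Qed.

Lemma factor_out (R : realType) (A : algType R[i]) (W : seq (nat * (bool * A))) k :
  k \notin map fst W -> factor W k = (false, 1).
Proof.
elim: W => //= w W IH; rewrite in_cons negb_or => /andP [/negbTE -> h].
exact: IH.
Qed.

Lemma factor_map (R : realType) (A : algType R[i]) (s : nat -> nat) (W : seq (nat * (bool * A))) k :
  injective s -> factor (map (fun w => (s w.1, w.2)) W) (s k) = factor W k.
Proof.
move=> si; elim: W => //= w W ->; by rewrite (inj_eq si).
Qed.

Lemma Xs_add T (h1 h2 : T -> T -> bool) e Q :
  Xs h1 e Q (+) Xs h2 e Q = Xs (fun a b => h1 a b (+) h2 a b) e Q.
Proof.
elim: Q => //= y Q <-.
by case: (h1 e y); case: (h2 e y); case: (Xs h1 e Q); case: (Xs h2 e Q).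
Qed.

Lemma Hx_add T (h1 h2 : T -> T -> bool) Q :
  Hx h1 Q (+) Hx h2 Q = Hx (fun a b => h1 a b (+) h2 a b) Q.
Proof.
elim: Q => //= y Q <-; rewrite -Xs_add.
by case: (Hx h1 Q); case: (Hx h2 Q); case: (Xs h1 y Q); case: (Xs h2 y Q).
Qed.

Lemma Xs_map T U (h : U -> U -> bool) (f : T -> U) e Q :
  Xs h (f e) (map f Q) = Xs (fun a b => h (f a) (f b)) e Q.
Proof. by elim: Q => //= y Q ->. Qed.

Lemma Hx_map T U (h : U -> U -> bool) (f : T -> U) Q :
  Hx h (map f Q) = Hx (fun a b => h (f a) (f b)) Q.
Proof. by elim: Q => //= y Q ->; rewrite Xs_map. Qed.

Definition sgb (R : realType) (b : bool) : R[i] := (-1) ^+ b.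

Lemma sgbD (R : realType) a b : sgb R (a (+) b) = sgb R a * sgb R b.
Proof. by case: a; case: b; rewrite /sgb /= ?expr0 ?expr1 ?mulr1 ?mul1r ?mulrNN ?mulr1. Qed.

Lemma sgb0 (R : realType) : sgb R false = 1.
Proof. by rewrite /sgb expr0. Qed.

Lemma sign_sum (R : realType) (I : Type) (r : seq I) (F : I -> nat) :
  (-1) ^+ (\sum_(i <- r) F i)%N = \prod_(i <- r) ((-1) ^+ (F i) : R[i]).
Proof. by elim: r => [|x r IH]; rewrite ?big_nil ?big_cons ?expr0 // exprD IH. Qed.

Definition lb (A : Type) (W : seq (nat * (bool * A))) := map (fun w => (w.1, w.2.1)) W.
Definition g0 (e y : nat * bool) : bool := e.2 && y.2 && (y.1 < e.1)%N.

Lemma factor_deg_cons (R : realType) (A : algType R[i]) w (W : seq (nat * (bool * A))) j :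
  (factor (w :: W) j).1 = ((j == w.1) && w.2.1) (+) (factor W j).1.
Proof. by rewrite /=; case: ifP. Qed.

Lemma prod_single (R : realType) (b c : bool) (q p : nat) :
  \prod_(j < p) sgb R (b && ((nat_of_ord j == q) && c)) = sgb R (b && c && (q < p)%N).
Proof.
elim: p => [|p IH]; first by rewrite big_ord0 andbF sgb0.
rewrite big_ord_recr /= IH -sgbD; congr sgb.
have -> : (q < p.+1)%N = (q < p)%N (+) (p == q).
  by rewrite ltnS leq_eqVlt eq_sym; case: ltngtP.
by case: (b); case: (c) => //=; case: (q < p)%N; case: (p == q).
Qed.

Lemma prod_deg (R : realType) (A : algType R[i]) (W : seq (nat * (bool * A))) b p :
  \prod_(j < p) sgb R (b && (factor W j).1) = sgb R (Xs g0 (p, b) (lb W)).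
Proof.
elim: W => [|w W IH].
  by rewrite /= big1 ?sgb0 // => j _; rewrite andbF sgb0.
under eq_bigr do rewrite factor_deg_cons andb_addr sgbD.
rewrite big_split /= IH prod_single sgbD /g0 /=.
by case: (b); case: (w.2.1).
Qed.

Lemma coef_term (R : realType) (A : algType R[i]) (W : seq (nat * (bool * A))) :
  (term W).1 = sgb R (Hx g0 (lb W)).
Proof.
elim: W => [|w W IH]; first by rewrite /= sgb0.
rewrite term_cons /hterm_mul /= sgbD -IH mulr1; congr (_ * _).
set n := maxn _ _.
have pn : (w.1 < n)%N by rewrite /n /= size_rcons size_nseq leq_max ltnSn.
rewrite sign_sum (bigD1 (Ordinal pn)) //=.
rewrite [X in _ * X]big1 ?mulr1.
  rewrite sign_sum.
  under eq_bigr do rewrite hfac_tpiece eqxx hfac_term.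
  exact: prod_deg.
move=> k kn; rewrite hfac_tpiece.
have -> : (nat_of_ord k == w.1) = false.
  by apply/negbTE; apply: contra kn => /eqP kw; apply/eqP; apply: val_inj.
by rewrite big1 ?expr0.
Qed.

Lemma prod_term (R : realType) (A : algType R[i]) (phi : A -> R[i]) (W : seq (nat * (bool * A))) :
  phi 1 = 1 ->
  \prod_(q <- (term W).2) phi q.2 = \prod_(k <- undup (map fst W)) phi (factor W k).2.
Proof.
move=> p1.
rewrite (big_nth (false, 1)) size_term.
under eq_bigr => k _ do rewrite -[nth _ _ _]/(hfac _ k) hfac_term.
rewrite (bigID (fun k => k \in map fst W)) /=.
rewrite [X in _ * X]big1 ?mulr1; last by move=> k kn; rewrite factor_out // p1.
rewrite -big_filter; apply: perm_big; apply: uniq_perm.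
- by rewrite filter_uniq // iota_uniq.
- exact: undup_uniq.
move=> k; rewrite mem_filter mem_index_iota mem_undup.
by case kW: (k \in map fst W) => //=; rewrite Msz_mem.
Qed.

Lemma gprops (R : realType) (A : algType R[i]) (gamma : A -> A) (phi : A -> R[i]) :
  graded_ncps gamma phi ->
  [/\ forall x y, gamma (x * y) = gamma x * gamma y, gamma 1 = 1,
      forall x, gamma (- x) = - gamma x,
      forall x, phi (gamma x) = phi x & forall x, phi (- x) = - phi x].
Proof.
case=> [gl [gm [g1 [gg [pl [p1 pg]]]]]].
have g0 : gamma 0 = 0.
  have h := gl 1 0 0; rewrite !scale1r addr0 in h.
  by have := congr1 (fun z => z - gamma 0) h; rewrite /= addrK subrr => <-.
have p0 : phi 0 = 0.
  have h := pl 1 0 0; rewrite scale1r mul1r addr0 in h.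
  by have := congr1 (fun z => z - phi 0) h; rewrite /= addrK subrr => <-.
split=> // x.
  by have := gl (-1) x 0; rewrite addr0 g0 addr0 !scaleN1r.
by have := pl (-1) x 0; rewrite addr0 p0 addr0 scaleN1r mulN1r.
Qed.

Lemma hpart_hom (R : realType) (A : algType R[i]) (gamma : A -> A) (phi : A -> R[i]) b x :
  graded_ncps gamma phi ->
  gamma (hpart gamma b x) = if b then - hpart gamma b x else hpart gamma b x.
Proof.
move=> G; case: (G) => [gl [gm [g1 [gg _]]]].
have [_ _ gN _ _] := gprops G.
have gZ : forall a y, gamma (a *: y) = a *: gamma y.
  move=> a y; have := gl a y 0; rewrite addr0.
  have := gl 1 0 0; rewrite !scale1r addr0 => h.
  have g0 : gamma 0 = 0.
    by have := congr1 (fun z => z - gamma 0) h; rewrite /= addrK subrr => <-.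
  by rewrite g0 addr0.
have gD : forall y z, gamma (y + z) = gamma y + gamma z.
  by move=> y z; have := gl 1 y z; rewrite !scale1r.
case: b; rewrite /hpart gZ gD ?gN gg.
  by rewrite -scalerN opprB.
by rewrite addrC.
Qed.

Lemma factor_hom (R : realType) (A : algType R[i]) (gamma : A -> A) (phi : A -> R[i])
    (W : seq (nat * (bool * A))) k :
  graded_ncps gamma phi ->
  (forall w, w \in W -> gamma w.2.2 = if w.2.1 then - w.2.2 else w.2.2) ->
  gamma (factor W k).2 = if (factor W k).1 then - (factor W k).2 else (factor W k).2.
Proof.
move=> G; have [gM g1 _ _ _] := gprops G.
elim: W => [|w W IH] hW /=; first by rewrite g1.
have IH' : gamma (factor W k).2 = if (factor W k).1 then - (factor W k).2 else (factor W k).2.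
  by apply: IH => v vW; apply: hW; rewrite in_cons vW orbT.
case: ifP => // _ /=; rewrite gM IH' (hW w (mem_head _ _)).
by case: (w.2.1); case: (factor W k).1; rewrite /= ?mulNr ?mulrN ?opprK.
Qed.

Lemma phi_odd (R : realType) (A : algType R[i]) (gamma : A -> A) (phi : A -> R[i]) y :
  graded_ncps gamma phi -> gamma y = - y -> phi y = 0.
Proof.
move=> G gy; have [_ _ _ pg pN] := gprops G.
have E : phi y = - phi y by rewrite -pN -gy pg.
have : phi y *+ 2 == 0 by rewrite mulr2n {1}E addNr.
by rewrite mulrn_eq0 /= => /eqP.
Qed.

Lemma factor_deg (R : realType) (A : algType R[i]) (W : seq (nat * (bool * A))) k :
  (factor W k).1 = odd (count_mem (k, true) (lb W)).
Proof.
elim: W => [|w W IH] //; rewrite factor_deg_cons IH /lb /= oddD oddb.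
by rewrite xpair_eqE eq_sym; case: (w.2.1).
Qed.

Lemma term_perm (R : realType) (A : algType R[i]) (gamma : A -> A) (phi : A -> R[i])
    (s : nat -> nat) (W : seq (nat * (bool * A))) :
  graded_ncps gamma phi -> injective s ->
  (forall w, w \in W -> gamma w.2.2 = if w.2.1 then - w.2.2 else w.2.2) ->
  (term W).1 * \prod_(q <- (term W).2) phi q.2 =
  (term (map (fun w => (s w.1, w.2)) W)).1 *
     \prod_(q <- (term (map (fun w => (s w.1, w.2)) W)).2) phi q.2.
Proof.
move=> G si hW.
have p1 : phi 1 = 1 by case: G => [_ [_ [_ [_ [_ [-> _]]]]]].
rewrite !prod_term // !coef_term.
have -> : map fst (map (fun w => (s w.1, w.2)) W) = map s (map fst W) by rewrite -!map_comp.
rewrite (undup_map_inj si) big_map.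
under [X in _ = _ * X]eq_bigr do rewrite factor_map //.
set P := \prod_(k <- undup _) _.
have -> : lb (map (fun w => (s w.1, w.2)) W) = map (fun e => (s e.1, e.2)) (lb W).
  by rewrite /lb -!map_comp.
rewrite Hx_map.
case: (eqVneq P 0) => [->|P0]; first by rewrite !mulr0.
congr (_ * _); congr sgb.
set Q := lb W.
suff : Hx g0 Q (+) Hx (fun a b => g0 (s a.1, a.2) (s b.1, b.2)) Q = false.
  by case: (Hx _ Q); case: (Hx _ Q).
rewrite Hx_add; apply: (@Hx_even _ _ (fun e => ~~ e.2)).
- move=> [p b] [q c]; rewrite /g0 /=; case: b; case: c => //=.
  case: (ltngtP p q) => [h|h|->]; [ | | by rewrite ltnn];
  case: (ltngtP (s p) (s q)) => // /si E; by move: h; rewrite E ltnn.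
- by move=> [p b]; rewrite /g0 /= !ltnn !andbF.
- by move=> [p b] [q c] /= /negbTE ->.
move=> [k b] kQ /=; rewrite negbK => hb; move: kQ; rewrite hb => kQ.
rewrite -factor_deg; apply/negP => odd1.
have kW : k \in undup (map fst W).
  rewrite mem_undup; have := map_f fst kQ; rewrite /Q /lb -map_comp.
  by congr (_ \in _); apply: eq_map.
move/eqP: P0; apply; rewrite /P (big_rem k) //= (@phi_odd _ _ gamma) ?mul0r //.
by rewrite (factor_hom _ G hW) odd1.
Qed.

Definition pcs (R : realType) (A : algType R[i]) (gamma : A -> A) (p : nat) (x : A) :
  seq (nat * (bool * A)) := [seq (p, (b, hpart gamma b x)) | b <- [:: false; true]].

Fixpoint choices (R : realType) (A : algType R[i]) (gamma : A -> A) (L : seq (nat * A)) :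
  seq (seq (nat * (bool * A))) :=
  if L is q :: L' then [seq c :: W | c <- pcs gamma q.1 q.2, W <- choices gamma L']
  else [:: [::]].

Definition Pf (R : realType) (A : algType R[i]) (gamma : A -> A) (L : seq (nat * A)) : tens A :=
  foldr (fun q acc => tens_mul (tens_embed gamma q.1 q.2) acc) (@tens_one R A) L.

Lemma allpairs_term (R : realType) (A : algType R[i]) (P : seq (nat * (bool * A))) C :
  tens_mul (map (@tpiece R A) P) (map (@term R A) C) = map (@term R A) [seq c :: W | c <- P, W <- C].
Proof.
elim: P => //= c P IH; rewrite /tens_mul /= in IH *.
by rewrite map_cat IH -!map_comp.
Qed.

Lemma Pf_choices (R : realType) (A : algType R[i]) (gamma : A -> A) (L : seq (nat * A)) :
  Pf gamma L = map (@term R A) (choices gamma L).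
Proof.
elim: L => // q L IH; rewrite [LHS]/= -/(Pf gamma L) IH.
exact: (allpairs_term (pcs gamma q.1 q.2) _).
Qed.

Lemma allpairs_map (R : realType) (A : algType R[i]) (f : nat * (bool * A) -> nat * (bool * A))
  (P : seq (nat * (bool * A))) C :
  [seq c :: W | c <- map f P, W <- map (map f) C] = map (map f) [seq c :: W | c <- P, W <- C].
Proof.
elim: P => //= c P IH; rewrite map_cat IH -!map_comp; congr (_ ++ _).
Qed.

Lemma choices_map (R : realType) (A : algType R[i]) (gamma : A -> A) (s : nat -> nat) (L : seq (nat * A)) :
  choices gamma (map (fun q => (s q.1, q.2)) L) =
  map (map (fun w => (s w.1, w.2))) (choices gamma L).
Proof.
elim: L => // q L IH; rewrite [LHS]/= IH.
exact: (allpairs_map _ (pcs gamma q.1 q.2) _).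
Qed.

Lemma choices_hom (R : realType) (A : algType R[i]) (gamma : A -> A) (phi : A -> R[i])
  (L : seq (nat * A)) W :
  graded_ncps gamma phi -> W \in choices gamma L ->
  forall w, w \in W -> gamma w.2.2 = if w.2.1 then - w.2.2 else w.2.2.
Proof.
move=> G; elim: L W => [|q L IH] W; first by rewrite /= inE => /eqP ->.
move=> HW.
have /allpairsPdep [c [W' [cP W'C ->]]] :
  W \in [seq c :: W0 | c <- pcs gamma q.1 q.2, W0 <- choices gamma L] := HW.
move=> w; rewrite in_cons => /orP [/eqP ->|].
  by move: cP => /mapP [b _ ->] /=; apply: (hpart_hom _ _ G).
exact: IH.
Qed.

Lemma tens_phi_map (R : realType) (A : algType R[i]) (phi : A -> R[i]) C :
  tens_phi phi (map (@term R A) C) =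
  \sum_(W <- C) (term W).1 * \prod_(q <- (term W).2) phi q.2.
Proof. by rewrite /tens_phi big_map. Qed.

Lemma big_Pf (R : realType) (A : algType R[i]) (gamma : A -> A) (L : seq (nat * A)) :
  \big[@tens_mul R A/@tens_one R A]_(q <- L) tens_embed gamma q.1 q.2 = Pf gamma L.
Proof. by elim: L => [|q L IH]; rewrite ?big_nil ?big_cons ?IH. Qed.

Theorem proposition4p21 (R : realType) (A : algType R[i])
    (gamma : A -> A) (phi : A -> R[i]) :
  graded_ncps gamma phi ->
  forall (n : nat) (X : 'I_n -> A) (i : 'I_n -> nat) (sigma : nat -> nat),
    bijective sigma ->
    tens_phi phi (\big[@tens_mul R A/@tens_one R A]_(j < n)
                     tens_embed gamma (i j) (X j))
    = tens_phi phi (\big[@tens_mul R A/@tens_one R A]_(j < n)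
                     tens_embed gamma (sigma (i j)) (X j)).
Proof.
move=> G n X i sigma /bij_inj si.
set L := [seq (i j, X j) | j <- index_enum 'I_n].
have -> : \big[@tens_mul R A/@tens_one R A]_(j < n) tens_embed gamma (i j) (X j)
    = Pf gamma L by rewrite -big_Pf big_map.
have -> : \big[@tens_mul R A/@tens_one R A]_(j < n) tens_embed gamma (sigma (i j)) (X j)
    = Pf gamma (map (fun q => (sigma q.1, q.2)) L) by rewrite -big_Pf /L -map_comp big_map.
rewrite !Pf_choices choices_map !tens_phi_map big_map.
apply: eq_big_seq => W WC /=.
apply: (term_perm (gamma := gamma)) => //; exact: (choices_hom G WC).
Qed.
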